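(* Let $n\ge 2$ and $1\le k\le n/2$ be integers, and let $w=\mathrm{A}^k\mathrm{M}^{n-k}$ be the word consisting of $k$ copies of a letter $\mathrm{A}$ followed by $n-k$ copies of a different letter $\mathrm{M}$. Then $f(w)=\max\{2(n-k)+1,\,4k\}$.
   Context: A word of length $n$ is a sequence $w=w_1w_2\cdots w_n$ of letters (symbols). Let $[n]=\{1,\dots,n\}$. An $n$-grid is a function $G:[n]^2\to\Sigma$, where $\Sigma$ is an arbitrary set of letters. The $i$th row of $G$ contains $w$ if $G(i,j)=w_j$ for all $1\le j\le n$, or $G(i,j)=w_{n-j+1}$ for all $1\le j\le n$. The $j$th column contains $w$ if $G(i,j)=w_i$ for all $i$, or $G(i,j)=w_{n-i+1}$ for all $i$. The main diagonal contains $w$ if $G(i,i)=w_i$ for all $i$ or $G(i,i)=w_{n-i+1}$ for all $i$; the anti-diagonal contains $w$ if $G(i,n-i+1)=w_i$ for all $i$ or $G(i,n-i+1)=w_{n-i+1}$ for all $i$. Let $f(w,G)$ be the number of the $2n+2$ lines ($n$ rows, $n$ columns, $2$ diagonals) of $G$ that contain $w$, and $f(w)=\max_G f(w,G)$ over all $n$-grids $G$. *)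

(* Defs.v *)
From mathcomp Require Import all_boot.
Set Implicit Arguments. Unset Strict Implicit. Unset Printing Implicit Defensive.

(* Indices are 0-based: position i in 'I_n corresponds to i+1 in the paper;
   the reversed position n-i+1 becomes rev_ord i (value n-1-i). *)

Section Grid.
Variable (T : eqType) (n : nat).

Definition word := 'I_n -> T.
Definition grid := 'I_n -> 'I_n -> T.

Definition line_contains (w : word) (L : 'I_n -> T) : bool :=
  [forall j, L j == w j] || [forall j, L j == w (rev_ord j)].

Definition row_line (G : grid) (i : 'I_n) : 'I_n -> T := fun j => G i j.
Definition col_line (G : grid) (j : 'I_n) : 'I_n -> T := fun i => G i j.
Definition diag_line (G : grid) : 'I_n -> T := fun i => G i i.
Definition antidiag_line (G : grid) : 'I_n -> T := fun i => G i (rev_ord i).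

Definition fwG (w : word) (G : grid) : nat :=
  #|[pred i | line_contains w (row_line G i)]|
  + #|[pred j | line_contains w (col_line G j)]|
  + line_contains w (diag_line G)
  + line_contains w (antidiag_line G).

End Grid.

Definition AkMword (T : eqType) (n k : nat) (A M : T) : word T n :=
  fun i => if (i < k)%N then A else M.

(* Main.v *)
Require Import Defs.
From mathcomp Require Import all_boot zify.
Set Implicit Arguments. Unset Strict Implicit. Unset Printing Implicit Defensive.

Definition tb6 (b00 b01 b10 b11 b20 b21 : bool) : nat -> nat -> bool :=
  fun p l => match p, l with
  | 0, 0 => b00 | 0, _ => b01 | 1, 0 => b10 | 1, _ => b11
  | _, 0 => b20 | _, _ => b21 end.
Definition tb2 (b0 b1 : bool) : nat -> bool := fun l => if l is 0 then b0 else b1.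
Definition rv (p : nat) : nat := match p with 0 => 1 | 1 => 0 | _ => 2 end.

Definition compat (r c : nat -> nat -> bool) (dg ad : nat -> bool) : bool :=
 [&& all (fun p => all (fun l => all (fun q => all (fun l' =>
        r p l ==> c q l' ==> ((q == l) == (p == l'))) [::0;1]) [::0;1;2]) [::0;1]) [::0;1;2],
     all (fun p => all (fun l => all (fun e =>
        r p l ==> dg e ==> ((p == l) == (p == e))) [::0;1]) [::0;1]) [::0;1;2],
     all (fun p => all (fun l => all (fun e =>
        c p l ==> dg e ==> ((p == l) == (p == e))) [::0;1]) [::0;1]) [::0;1;2],
     all (fun p => all (fun l => all (fun e =>
        r p l ==> ad e ==> ((rv p == l) == (p == e))) [::0;1]) [::0;1]) [::0;1;2] &
     all (fun p => all (fun l => all (fun e =>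
        c p l ==> ad e ==> ((rv p == l) == (rv p == e))) [::0;1]) [::0;1]) [::0;1;2]].

Definition ca (r c : nat -> nat -> bool) : nat :=
  (r 0 0 || r 0 1) + (r 1 0 || r 1 1) + (c 0 0 || c 0 1) + (c 1 0 || c 1 1).
Definition cb (r c : nat -> nat -> bool) : nat := (r 2 0 || r 2 1) + (c 2 0 || c 2 1).
Definition cd (dg ad : nat -> bool) : nat := (dg 0 || dg 1) + (ad 0 || ad 1).
Definition okb (a b d : nat) : bool :=
  [&& a <= 4, b <= 2, d <= 2, a + b <= 4, a + b + d <= 5 & a + d <= 4].

Definition allb (f : bool -> bool) := f true && f false.
Lemma allbP f b : allb f -> f b.
Proof. by case/andP; case: b. Qed.

Definition check16 : bool :=
 allb (fun r00 => allb (fun r01 => allb (fun r10 => allb (fun r11 =>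
 allb (fun r20 => allb (fun r21 => allb (fun c00 => allb (fun c01 =>
 allb (fun c10 => allb (fun c11 => allb (fun c20 => allb (fun c21 =>
 allb (fun d0 => allb (fun d1 => allb (fun a0 => allb (fun a1 =>
   let r := tb6 r00 r01 r10 r11 r20 r21 in
   let c := tb6 c00 c01 c10 c11 c20 c21 in
   let dg := tb2 d0 d1 in let ad := tb2 a0 a1 in
   compat r c dg ad ==> okb (ca r c) (cb r c) (cd dg ad)
 )))))))))))))))).

Lemma check16_ok : check16.
Proof. vm_compute. reflexivity. Qed.

Lemma check_fun (r c : nat -> nat -> bool) (dg ad : nat -> bool) :
  compat r c dg ad -> okb (ca r c) (cb r c) (cd dg ad).
Proof.
have h := check16_ok.
have {h} := allbP (r 0 0) h. move/(allbP (r 0 1)). move/(allbP (r 1 0)).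
move/(allbP (r 1 1)). move/(allbP (r 2 0)). move/(allbP (r 2 1)).
move/(allbP (c 0 0)). move/(allbP (c 0 1)). move/(allbP (c 1 0)).
move/(allbP (c 1 1)). move/(allbP (c 2 0)). move/(allbP (c 2 1)).
move/(allbP (dg 0)). move/(allbP (dg 1)). move/(allbP (ad 0)). move/(allbP (ad 1)).
move=> /implyP H /H. exact.
Qed.

Lemma okb_ineq a b d n k : okb a b d -> 1 <= k -> 2 * k <= n ->
  a * k + b * (n - 2 * k) + d <= maxn (2 * (n - k) + 1) (4 * k).
Proof.
case/and5P=> ha hb hd h1 /andP[h2 h3] hk hn.
case: a ha h1 h2 h3 => [|[|[|[|[|a]]]]] // ha;
case: b hb => [|[|[|b]]] // hb /= h1 h2 h3; lia.
Qed.

Section Main.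
Variables (T : eqType) (A M : T) (n k : nat).
Hypotheses (hAM : A != M) (hn : 2 <= n) (hk : 1 <= k) (hkn : 2 * k <= n).

Local Notation w := (@AkMword T n k A M).

Definition pcn (i : nat) : nat := if i < k then 0 else if n - k <= i then 1 else 2.
Definition lab (L : 'I_n -> T) : nat := if [forall j, L j == w j] then 0 else 1.

Lemma wA (j : 'I_n) : (w j == A) = (j < k).
Proof. by rewrite /AkMword; case: ifP => _; rewrite ?eqxx // eq_sym (negbTE hAM). Qed.

Lemma wrevA (j : 'I_n) : (w (rev_ord j) == A) = (n - k <= j).
Proof. rewrite wA /=; have := ltn_ord j. move=> hj. apply/idP/idP => h; lia. Qed.

Lemma contains_A (L : 'I_n -> T) j : line_contains w L -> (L j == A) = (pcn j == lab L).
Proof.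
rewrite /line_contains /lab; case: ifP => [/forallP H _|_ /= /forallP H];
  rewrite (eqP (H j)) ?wrevA ?wA /pcn.
  by case: ifP => //; case: ifP.
case: (ltnP j k) => h1 /=; last by case: ifP. by have -> : (n - k <= j) = false by apply/negbTE; rewrite -ltnNge; lia.
Qed.

Lemma pcn_rev (i : 'I_n) : pcn (rev_ord i) = rv (pcn i).
Proof.
have := ltn_ord i; rewrite /pcn /= => hi.
case: (ltnP (n - i.+1) k) => h1; case: (leqP (n - k) (n - i.+1)) => h2;
case: (ltnP i k) => h3; case: (leqP (n - k) i) => h4 //=; lia.
Qed.

Lemma sum_pc (F : nat -> nat) : \sum_(i < n) F (pcn i) = k * F 0 + k * F 1 + (n - 2 * k) * F 2.
Proof.
rewrite -(big_mkord xpredT (fun i => F (pcn i))).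
rewrite (big_cat_nat _ (n := k)) //=; last lia.
rewrite [X in _ + X](big_cat_nat _ (n := n - k)) //=; [|lia|lia]. rewrite addnA.
rewrite (eq_big_nat _ _ (F2 := fun _ => F 0)); last first.
  by move=> i /andP[_ hi]; rewrite /pcn hi.
rewrite [X in _ + X + _](eq_big_nat _ _ (F2 := fun _ => F 2)); last first.
  move=> i /andP[h1 h2]; rewrite /pcn ltnNge h1 /= leqNgt h2 //.
rewrite [X in _ + X](eq_big_nat _ _ (F2 := fun _ => F 1)); last first.
  move=> i /andP[h1 h2]; rewrite /pcn h1; case: ifP => //; lia.
rewrite !sum_nat_const_nat.
have -> : k - 0 = k by lia.
have -> : n - (n - k) = k by lia.
have -> : n - k - k = n - 2 * k by lia.
lia.
Qed.

Lemma card_sum (P : pred 'I_n) : #|P| = \sum_(i < n) P i.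
Proof. rewrite -sum1_card big_mkcond /=; apply: eq_bigr => i _. have -> : (i \in P) = P i by []. by case: (P i). Qed.

Definition ex_pc (P : pred 'I_n) (p : nat) : bool := [exists i, P i && (pcn i == p)].

Lemma card_bound (P : pred 'I_n) :
  #|P| <= ex_pc P 0 * k + ex_pc P 1 * k + ex_pc P 2 * (n - 2 * k).
Proof.
have key : forall p, \sum_(i < n) (P i && (pcn i == p)) <= ex_pc P p * \sum_(i < n) (pcn i == p).
  move=> p; rewrite /ex_pc; case: existsP => [_|H].
    by rewrite mul1n; apply: leq_sum => i _; case: (P i).
  rewrite big1 // => i _; case: (boolP (P i && (pcn i == p))) => // hi.
  by case: H; exists i.
rewrite card_sum.
have -> : \sum_(i < n) P i = \sum_(i < n) (P i && (pcn i == 0)) + \sum_(i < n) (P i && (pcn i == 1))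
     + \sum_(i < n) (P i && (pcn i == 2)).
  rewrite -!big_split /=; apply: eq_bigr => i _; rewrite /pcn.
  by case: (P i); case: ifP => //; case: ifP.
have e0 := sum_pc (fun p => p == 0). have e1 := sum_pc (fun p => p == 1).
have e2 := sum_pc (fun p => p == 2). simpl in e0, e1, e2.
have k0 := key 0. have k1 := key 1. have k2 := key 2.
rewrite e0 in k0; rewrite e1 in k1; rewrite e2 in k2.
rewrite !muln0 !muln1 !addn0 !add0n in k0 k1 k2.
lia.
Qed.


Section Grid.
Variable G : grid T n.

Definition eR p l := [exists i, line_contains w (row_line G i) && (pcn i == p) && (lab (row_line G i) == l)].
Definition eC p l := [exists i, line_contains w (col_line G i) && (pcn i == p) && (lab (col_line G i) == l)].
Definition dgb e := line_contains w (diag_line G) && (lab (diag_line G) == e).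
Definition adb e := line_contains w (antidiag_line G) && (lab (antidiag_line G) == e).

Lemma RC p l q l' : eR p l -> eC q l' -> (q == l) == (p == l').
Proof.
case/existsP => i /andP[/andP[hi /eqP pi] /eqP li].
case/existsP => j /andP[/andP[hj /eqP pj] /eqP lj].
have e1 := contains_A j hi. have e2 := contains_A i hj.
by rewrite -pj -li -pi -lj -e1 -e2.
Qed.

Lemma RD p l e : eR p l -> dgb e -> (p == l) == (p == e).
Proof.
case/existsP => i /andP[/andP[hi /eqP pi] /eqP li] /andP[hd /eqP he].
have e1 := contains_A i hi. have e2 := contains_A i hd.
by rewrite -pi -li -he -e1 -e2.
Qed.

Lemma CD p l e : eC p l -> dgb e -> (p == l) == (p == e).
Proof.
case/existsP => i /andP[/andP[hi /eqP pi] /eqP li] /andP[hd /eqP he].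
have e1 := contains_A i hi. have e2 := contains_A i hd.
by rewrite -pi -li -he -e1 -e2.
Qed.

Lemma RA p l e : eR p l -> adb e -> (rv p == l) == (p == e).
Proof.
case/existsP => i /andP[/andP[hi /eqP pi] /eqP li] /andP[hd /eqP he].
have e1 := contains_A (rev_ord i) hi. have e2 := contains_A i hd.
by rewrite -pi -li -he -pcn_rev -e1 -e2.
Qed.

Lemma CA p l e : eC p l -> adb e -> (rv p == l) == (rv p == e).
Proof.
case/existsP => i /andP[/andP[hi /eqP pi] /eqP li] /andP[hd /eqP he].
have e1 := contains_A (rev_ord i) hi. have e2 := contains_A (rev_ord i) hd.
rewrite -pi -li -he -pcn_rev -e1 -e2 /antidiag_line /col_line.
by rewrite rev_ordK.
Qed.

Lemma compat_G : compat eR eC dgb adb.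
Proof.
apply/and5P; split;
  apply/allP => p _; apply/allP => l _; apply/allP => q _; try (apply/allP => l' _);
  apply/implyP => h1; apply/implyP => h2.
- exact: RC h1 h2.
- exact: RD h1 h2.
- exact: CD h1 h2.
- exact: RA h1 h2.
- exact: CA h1 h2.
Qed.

Lemma lab01 (L : 'I_n -> T) : (lab L == 0) || (lab L == 1).
Proof. by rewrite /lab; case: ifP. Qed.

Lemma exR p : ex_pc [pred i | line_contains w (row_line G i)] p = eR p 0 || eR p 1.
Proof.
rewrite /ex_pc /eR; apply/existsP/orP.
  case=> i /andP[/= hi hp]; case/orP: (lab01 (row_line G i)) => hl; [left|right];
  by apply/existsP; exists i; rewrite hi hp hl.
by case=> /existsP[i /andP[/andP [hi hp] _]]; exists i; rewrite /= hi hp.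
Qed.

Lemma exC p : ex_pc [pred i | line_contains w (col_line G i)] p = eC p 0 || eC p 1.
Proof.
rewrite /ex_pc /eC; apply/existsP/orP.
  case=> i /andP[/= hi hp]; case/orP: (lab01 (col_line G i)) => hl; [left|right];
  by apply/existsP; exists i; rewrite hi hp hl.
by case=> /existsP[i /andP[/andP [hi hp] _]]; exists i; rewrite /= hi hp.
Qed.

Lemma exD : line_contains w (diag_line G) = dgb 0 || dgb 1.
Proof. by rewrite /dgb -andb_orr lab01 andbT. Qed.
Lemma exA : line_contains w (antidiag_line G) = adb 0 || adb 1.
Proof. by rewrite /adb -andb_orr lab01 andbT. Qed.

Lemma upper : fwG w G <= maxn (2 * (n - k) + 1) (4 * k).
Proof.
have H0 := check_fun compat_G.
have H := okb_ineq H0 hk hkn.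
apply: leq_trans H.
rewrite /fwG /ca /cb /cd.
have hR := card_bound [pred i | line_contains w (row_line G i)].
have hC := card_bound [pred i | line_contains w (col_line G i)].
rewrite !exR in hR; rewrite !exC in hC; rewrite exD exA.
move: hR hC.
move: (nat_of_bool (eR 0 0 || eR 0 1)) (nat_of_bool (eR 1 0 || eR 1 1)) (nat_of_bool (eR 2 0 || eR 2 1))
  (nat_of_bool (eC 0 0 || eC 0 1)) (nat_of_bool (eC 1 0 || eC 1 1)) (nat_of_bool (eC 2 0 || eC 2 1))
  (nat_of_bool (dgb 0 || dgb 1)) (nat_of_bool (adb 0 || adb 1))
  #|[pred i | line_contains w (row_line G i)]| #|[pred j | line_contains w (col_line G j)]|
  (n - 2 * k) => x0 x1 x2 y0 y1 y2 d a r c v hR hC.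
rewrite !mulnDl. lia.
Qed.

End Grid.


Lemma revk (j : 'I_n) : (rev_ord j < k) = (n - k <= j).
Proof. rewrite /=; have := ltn_ord j => hj; apply/idP/idP => h; lia. Qed.

Lemma lc_if (L : 'I_n -> T) (S : 'I_n -> bool) : (forall j, L j = if S j then A else M) ->
  line_contains w L = [forall j, S j == (j < k)] || [forall j, S j == (n - k <= j)].
Proof.
move=> hL; rewrite /line_contains; congr (_ || _); apply: eq_forallb => j;
  rewrite hL /AkMword ?revk;
  by case: (S j); case: ifP => _; rewrite ?eqxx // ?(negbTE hAM) // eq_sym (negbTE hAM).
Qed.

Lemma card_pcB (P : pred 'I_n) (B : nat -> bool) : (forall i, P i = B (pcn i)) ->
  #|P| = k * B 0 + k * B 1 + (n - 2 * k) * B 2.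
Proof.
move=> hP; rewrite card_sum (eq_bigr (fun i : 'I_n => nat_of_bool (B (pcn i)))) ?(sum_pc (fun p => nat_of_bool (B p))) //.
by move=> i _; rewrite hP.
Qed.

Definition o0 : 'I_n := Ordinal (leq_trans (isT : 0 < 2) hn).
Definition ol : 'I_n := rev_ord o0.
Lemma o0E : nat_of_ord o0 = 0. Proof. by []. Qed.
Lemma olE : nat_of_ord ol = n - 1. Proof. by []. Qed.

Ltac ftrue := apply/forallP => j; have := ltn_ord j; rewrite /= => ?; apply/eqP; lia.
Ltac ffalse x := apply/negP => /forallP /(_ x) /eqP; have := ltn_ord x; rewrite /= ?o0E ?olE => ?; lia.

Definition G1 : grid T n := fun i j =>
  if ((i < k) && (j < k)) || ((n - k <= i) && (n - k <= j)) then A else M.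
Definition G2 : grid T n := fun i j =>
  if [|| (k <= i) && (j < k), (i < k) && (k <= j) | (i < k) && (i == j :> nat)] then A else M.

Lemma G1_val : fwG w G1 = 4 * k.
Proof.
have hr : forall i, line_contains w (row_line G1 i) = (pcn i != 2).
  move=> i; rewrite (lc_if (S := fun j => ((i < k) && (j < k)) || ((n - k <= i) && (n - k <= j)))) //.
  have := ltn_ord i; rewrite /pcn; case: (ltnP i k) => h1 /= hi.
    by apply/orP; left; ftrue.
  case: (leqP (n - k) i) => h2 /=.
    by apply/orP; right; ftrue.
  apply/negbTE; rewrite negb_or; apply/andP; split; [ffalse o0 | ffalse ol].
have hc : forall i, line_contains w (col_line G1 i) = (pcn i != 2).
  move=> i; rewrite (lc_if (S := fun j => ((j < k) && (i < k)) || ((n - k <= j) && (n - k <= i)))) //.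
  have := ltn_ord i; rewrite /pcn; case: (ltnP i k) => h1 /= hi.
    by apply/orP; left; ftrue.
  case: (leqP (n - k) i) => h2 /=.
    by apply/orP; right; ftrue.
  apply/negbTE; rewrite negb_or; apply/andP; split; [ffalse o0 | ffalse ol].
have hd : line_contains w (diag_line G1) = false.
  rewrite (lc_if (S := fun j => ((j < k) && (j < k)) || ((n - k <= j) && (n - k <= j)))) //.
  apply/negbTE; rewrite negb_or; apply/andP; split; [ffalse ol | ffalse o0].
have ha : line_contains w (antidiag_line G1) = false.
  rewrite (lc_if (S := fun j => ((j < k) && (rev_ord j < k)) || ((n - k <= j) && (n - k <= rev_ord j)))) //.
  apply/negbTE; rewrite negb_or; apply/andP; split; [ffalse o0 | ffalse ol].
rewrite /fwG hd ha (card_pcB (B := fun p => p != 2) hr) (card_pcB (B := fun p => p != 2) hc) /=.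
lia.
Qed.

Lemma G2_val : fwG w G2 = 2 * (n - k) + 1.
Proof.
have hr : forall i, line_contains w (row_line G2 i) = (pcn i != 0).
  move=> i; rewrite (lc_if (S := fun j => [|| (k <= i) && (j < k), (i < k) && (k <= j) | (i < k) && (i == j :> nat)])) //.
  have := ltn_ord i; rewrite /pcn; case: (ltnP i k) => h1 /= hi.
    apply/negbTE; rewrite negb_or; apply/andP; split; [ffalse ol | ffalse i].
  by case: ifP => _; apply/orP; left; ftrue.
have hc : forall i, line_contains w (col_line G2 i) = (pcn i != 0).
  move=> i; rewrite (lc_if (S := fun j => [|| (k <= j) && (i < k), (j < k) && (k <= i) | (j < k) && (j == i :> nat)])) //.
  have := ltn_ord i; rewrite /pcn; case: (ltnP i k) => h1 /= hi.
    apply/negbTE; rewrite negb_or; apply/andP; split; [ffalse ol | ffalse i].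
  by case: ifP => _; apply/orP; left; ftrue.
have hd : line_contains w (diag_line G2) = true.
  rewrite (lc_if (S := fun j => [|| (k <= j) && (j < k), (j < k) && (k <= j) | (j < k) && (j == j :> nat)])) //.
  by apply/orP; left; ftrue.
have ha : line_contains w (antidiag_line G2) = false.
  rewrite (lc_if (S := fun j => [|| (k <= j) && (rev_ord j < k), (j < k) && (k <= rev_ord j) | (j < k) && (j == rev_ord j :> nat)])) //.
  apply/negbTE; rewrite negb_or; apply/andP; split; [ffalse ol | ffalse o0].
rewrite /fwG hd ha (card_pcB (B := fun p => p != 0) hr) (card_pcB (B := fun p => p != 0) hc) /=.
lia.
Qed.

End Main.


Theorem theorem5 (T : eqType) (A M : T) (n k : nat) :
  A != M -> (2 <= n)%N -> (1 <= k)%N -> (2 * k <= n)%N ->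
  let m := maxn (2 * (n - k) + 1) (4 * k) in
  (exists G : grid T n, fwG (@AkMword T n k A M) G = m) /\
  (forall G : grid T n, (fwG (@AkMword T n k A M) G <= m)%N).
Proof.
move=> hAM hn hk hkn m; split; last by move=> G; exact: upper.
rewrite /m; case: (leqP (2 * (n - k) + 1) (4 * k)) => h.
  by exists (@G1 T A M n k); rewrite (G1_val hAM hn hk hkn); lia.
exists (@G2 T A M n k); rewrite (G2_val hAM hn hk hkn); lia.
Qed.
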